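(* Let $\pi\in\mathfrak{S}_m$ be in standard form. Then, as $k\to\infty$, $\left(r^\pi_{1+k(m-1),k}\right)^{1/k}=O\!\left(k^{m-\pi_m+\pi_1-1}\right)$.
   Context: The standardization $\operatorname{st}(w)$ of a word of distinct integers replaces its smallest entry by 1, the next smallest by 2, etc. For $\pi\in\mathfrak{S}_m$ and $\sigma\in\mathfrak{S}_n$, $\operatorname{Em}(\pi,\sigma)=\{i\in[n-m+1]:\operatorname{st}(\sigma_i\cdots\sigma_{i+m-1})=\pi\}$. The overlap set is $\mathcal{O}_\pi=\{i\in[m-1]:\operatorname{st}(\pi_{i+1}\cdots\pi_m)=\operatorname{st}(\pi_1\cdots\pi_{m-i})\}$. A $\pi$-cluster is a pair $(\sigma,S)$ with $\sigma\in\mathfrak{S}_n$ and $S=\{i_1<\dots<i_k\}\subseteq\operatorname{Em}(\pi,\sigma)$ such that $i_1=1$, $i_k=n-m+1$, and $i_{j+1}-i_j\in\mathcal{O}_\pi$ for all $j\in[k-1]$. The cluster number $r^\pi_{n,k}$ is the number of $\pi$-clusters $(\sigma,S)$ with $\sigma\in\mathfrak{S}_n$ and $|S|=k$. $\pi\in\mathfrak{S}_m$ is in standard form if $\pi_1<\pi_m$ and $\pi_1+\pi_m\le m+1$. *)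

(* Defs.v *)
(* Words and permutations are 1-indexed sequences of nats. *)
From mathcomp Require Import all_boot all_fingroup.
Set Implicit Arguments. Unset Strict Implicit. Unset Printing Implicit Defensive.

Definition is_perm_seq (m : nat) (p : seq nat) : bool := perm_eq p (iota 1 m).

(* standardization of a word of distinct integers: each entry is replaced
   by its rank (number of entries <= it) *)
Definition st (w : seq nat) : seq nat := [seq count (fun y => y <= x) w | x <- w].

(* the factor w_i ... w_(i+len-1) (1-indexed i) *)
Definition window (w : seq nat) (i len : nat) : seq nat := take len (drop i.-1 w).

Definition in_Em (p w : seq nat) (i : nat) : bool :=
  [&& 1 <= i, i + size p <= (size w).+1 & st (window w i (size p)) == p].

Definition in_overlap (p : seq nat) (i : nat) : bool :=
  [&& 1 <= i, i <= (size p).-1 & st (drop i p) == st (take (size p - i) p)].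

(* (sigma, S) is a pi-cluster, S given as its increasing list i_1 < ... < i_k *)
Definition is_cluster (p w : seq nat) (S : seq nat) : bool :=
  [&& sorted ltn S, all (in_Em p w) S, head 0 S == 1,
      last 0 S == size w - size p + 1
    & all (fun pr => in_overlap p (pr.2 - pr.1)) (zip S (behead S))].

Definition word (n : nat) (s : 'S_n) : seq nat := [seq (val (s i)).+1 | i <- enum 'I_n].

(* cluster number r^pi_{n,k}; positions of S lie in {0..n}, which contains [n-m+1] *)
Definition cluster_number (p : seq nat) (n k : nat) : nat :=
  \sum_(s : 'S_n)
    #|[set S : {set 'I_n.+1} |
        (#|S| == k) && is_cluster p (word s) (sort leq [seq val i | i <- enum S])]|.

Definition standard_form (m : nat) (p : seq nat) : bool :=
  (nth 0 p 0 < nth 0 p m.-1) && (nth 0 p 0 + nth 0 p m.-1 <= m.+1).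

(* Main.v *)
Require Import Defs.
From mathcomp Require Import all_boot all_fingroup.
From mathcomp Require Import zify.
Set Implicit Arguments. Unset Strict Implicit.


Lemma st_lt (w p : seq nat) a b : st w = p -> a < size w -> b < size w ->
  nth 0 p a < nth 0 p b -> nth 0 w a < nth 0 w b.
Proof.
move=> <- ha hb; rewrite /st !(nth_map 0) //.
rewrite ltnNge => H; rewrite ltnNge; apply: contra H => Hba.
apply: sub_count => x /= Hx; exact: leq_trans Hx Hba.
Qed.

Definition keyf (p : seq nat) (d t : nat) := (t %/ d) * d.+1 + nth 0 p (t %% d).
Definition inQ (p : seq nat) (d t : nat) :=
  (0 < t %% d) && ((nth 0 p (t %% d) < nth 0 p 0) || (nth 0 p d < nth 0 p (t %% d))).

Lemma key_inj p d : 0 < d -> uniq p -> size p = d.+1 ->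
  (forall a, a <= d -> 0 < nth 0 p a <= d.+1) ->
  forall t u, keyf p d t = keyf p d u -> t = u.
Proof.
move=> d0 up sp hb t u; rewrite /keyf.
have ht := ltn_pmod t d0; have hu := ltn_pmod u d0.
have /andP[b1 b2] := hb (t %% d) (ltnW ht).
have /andP[b3 b4] := hb (u %% d) (ltnW hu).
move=> E; rewrite [t](divn_eq t d) [u](divn_eq u d); move: E b1 b2 b3 b4 ht hu.
move: (t %/ d) (u %/ d) (t %% d) (u %% d) => jt ju ta ua E b1 b2 b3 b4 ht hu.
have ej : jt = ju.
  case: (ltngtP jt ju) => // h.
  - have : jt * d.+1 + d.+1 <= ju * d.+1 by rewrite -mulSnr leq_mul2r h orbT.
    lia.
  - have : ju * d.+1 + d.+1 <= jt * d.+1 by rewrite -mulSnr leq_mul2r h orbT.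
    lia.
have ea : ta = ua.
  move: E; rewrite ej => /addnI /eqP; rewrite nth_uniq ?sp //; [by move/eqP|lia|lia].
by rewrite ej ea.
Qed.

Lemma order_lemma p d k (W : nat -> nat) :
  0 < d -> size p = d.+1 -> uniq p -> (forall a, a <= d -> 0 < nth 0 p a <= d.+1) ->
  nth 0 p 0 < nth 0 p d ->
  (forall j a b, j < k -> a <= d -> b <= d -> nth 0 p a < nth 0 p b -> W (j*d+a) < W (j*d+b)) ->
  forall t u, t <= k*d -> u <= k*d -> ~~ inQ p d t -> ~~ inQ p d u ->
  keyf p d t < keyf p d u -> W t < W u.
Proof.
move=> d0 sp up hb p0d Hw.
have step j : j < k -> W (j * d) < W (j.+1 * d).
  move=> jk; have := Hw j 0 d jk (leq0n _) (leqnn _) p0d.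
  by rewrite addn0 mulSnr.
have chain i l : i + l <= k -> W (i * d) <= W ((i + l) * d).
  elim: l => [|l IH] hl; first by rewrite addn0.
  have hl' : i + l <= k by lia.
  apply: leq_trans (IH hl') _.
  rewrite addnS; apply: ltnW; apply: step; by rewrite -addnS.
have chainle i j : i <= j -> j <= k -> W (i * d) <= W (j * d).
  move=> ij jk; have := chain i (j - i); rewrite subnKC //; by apply.
have chainlt i j : i < j -> j <= k -> W (i * d) < W (j * d).
  move=> ij jk; apply: leq_trans (step i (leq_trans ij jk)) _.
  exact: chainle.
have neq a b : a <= d -> b <= d -> a != b -> nth 0 p a != nth 0 p b.
  by move=> ha hb' ab; rewrite nth_uniq ?sp ?ltnS.
have Mf j a : j < k -> 0 < a -> a < d -> ~~ (nth 0 p a < nth 0 p 0) -> ~~ (nth 0 p d < nth 0 p a) ->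
   W (j * d) < W (j * d + a) /\ W (j * d + a) < W (j.+1 * d).
  move=> jk a0 ad; rewrite -!leqNgt => h1 h2.
  have h1' : nth 0 p 0 < nth 0 p a.
    rewrite ltn_neqAle h1 andbT; apply: neq; rewrite ?leq0n ?(ltnW ad) //; lia.
  have h2' : nth 0 p a < nth 0 p d.
    rewrite ltn_neqAle h2 andbT; apply: neq; rewrite ?leqnn ?(ltnW ad) //; lia.
  split; first by have := Hw j 0 a jk (leq0n _) (ltnW ad) h1'; rewrite addn0.
  by have := Hw j a d jk (ltnW ad) (leqnn _) h2'; rewrite mulSnr.
move=> t u; rewrite /inQ /keyf.
have := ltn_pmod t d0; have := ltn_pmod u d0.
move: (divn_eq t d) (divn_eq u d).
move: (t %/ d) (u %/ d) (t %% d) (u %% d) => jt ju ta ua -> -> hu ht.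
move=> tk uk Qt Qu.
have hbt := hb ta (ltnW ht); have hbu := hb ua (ltnW hu).
have jtk : 0 < ta -> jt < k.
  move=> ta0; rewrite -(ltn_pmul2r d0); lia.
have juk : 0 < ua -> ju < k.
  move=> ua0; rewrite -(ltn_pmul2r d0); lia.
have mono i j : i < j -> i * d.+1 + d.+1 <= j * d.+1.
  by move=> ij; rewrite -mulSnr leq_mul2r ij orbT.
case: (posnP ta) => [ta0|ta0]; case: (posnP ua) => [ua0|ua0].
- subst ta ua; rewrite !addn0 => hk.
  have : jt < ju by case: (ltngtP jt ju) => // h; [have := mono _ _ h; lia | subst; lia].
  move=> h; apply: chainlt h _; rewrite -(leq_pmul2r d0); lia.
- subst ta; rewrite addn0 => hk.
  move: Qu; rewrite ua0 /= negb_or => /andP[q1 q2].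
  have [M1 M2] := Mf ju ua (juk ua0) ua0 hu q1 q2.
  have : jt <= ju by case: (ltngtP jt ju) => // h; have := mono _ _ h; lia.
  move=> h; apply: leq_ltn_trans M1; apply: chainle h (ltnW (juk ua0)).
- subst ua; rewrite addn0 => hk.
  move: Qt; rewrite ta0 /= negb_or => /andP[q1 q2].
  have [M1 M2] := Mf jt ta (jtk ta0) ta0 ht q1 q2.
  have p0a : nth 0 p 0 <= nth 0 p ta by rewrite leqNgt.
  have : jt < ju.
    case: (ltngtP jt ju) => // h; [have := mono _ _ h; lia | subst; lia].
  move=> h; apply: leq_trans M2 _; apply: chainle h _; rewrite -(leq_pmul2r d0); lia.
- move=> hk.
  move: Qt; rewrite ta0 /= negb_or => /andP[q1 q2].
  move: Qu; rewrite ua0 /= negb_or => /andP[q3 q4].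
  have [M1 M2] := Mf jt ta (jtk ta0) ta0 ht q1 q2.
  have [M3 M4] := Mf ju ua (juk ua0) ua0 hu q3 q4.
  case: (ltngtP jt ju) => h.
  + apply: ltn_trans M2 _; apply: leq_ltn_trans M3; exact: chainle h (ltnW (juk ua0)).
  + have := mono _ _ h; lia.
  + subst ju; apply: Hw; rewrite ?(ltnW ht) ?(ltnW hu) ?jtk //; lia.
Qed.

Lemma inj_main n (s1 s2 : 'S_n) (R : pred nat) (key : nat -> nat) :
  (forall t u, key t = key u -> t = u) ->
  (forall i j : 'I_n, R i -> R j -> key i < key j -> s1 i < s1 j) ->
  (forall i j : 'I_n, R i -> R j -> key i < key j -> s2 i < s2 j) ->
  (forall i : 'I_n, ~~ R i -> s1 i = s2 i) -> s1 = s2.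
Proof.
move=> kinj H1 H2 HQ.
suff E : forall v : 'I_n, (s1^-1)%g v = (s2^-1)%g v.
  apply/permP => i; have := E (s1 i); rewrite permK => e.
  by rewrite [in RHS]e permKV.
suff E : forall N (v : 'I_n), v < N -> (s1^-1)%g v = (s2^-1)%g v.
  by move=> v; apply: (E n).
elim=> [//|N IH] v vN.
have e1 := permKV s1 v; have e2 := permKV s2 v.
move: e1 e2; set i := (s1^-1)%g v; set i' := (s2^-1)%g v => e1 e2.
case Ri: (R i); last first.
  by apply: (canRL (permK s2)); rewrite -HQ ?Ri.
case Ri': (R i'); last first.
  by apply/esym/(canRL (permK s1)); rewrite HQ ?Ri'.
case: (eqVneq i i') => // ne.
have nk : key i != key i'.
  by apply/negP => /eqP /kinj /val_inj E; rewrite E eqxx in ne.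
case: (ltngtP (key i) (key i')) => h.
- have lt := H2 _ _ Ri Ri' h; rewrite e2 in lt.
  have := IH (s2 i) (leq_trans lt vN); rewrite permK => E.
  have : s1 i = s2 i by rewrite -[in LHS]E permKV.
  by rewrite e1 => ev; rewrite ev ltnn in lt.
- have lt := H1 _ _ Ri' Ri h; rewrite e1 in lt.
  have := IH (s1 i') (leq_trans lt vN); rewrite permK => E.
  have : s2 i' = s1 i' by rewrite [in LHS]E permKV.
  by rewrite e2 => ev; rewrite -ev ltnn in lt.
- by rewrite h eqxx in nk.
Qed.

Lemma count_lt_iota c a l : count (fun x => x < c) (iota a l) = minn l (c - a).
Proof. elim: l a => [|l IH] a /=; first by rewrite min0n. rewrite IH; lia. Qed.

Lemma count_gt_iota c a l : count (fun x => c < x) (iota a l) = l - minn l (c.+1 - a).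
Proof. elim: l a => [|l IH] a /=; first by rewrite min0n. rewrite IH; lia. Qed.

Lemma inQ_mod p d t : 0 < d -> inQ p d t = inQ p d (t %% d).
Proof. by move=> d0; rewrite /inQ modn_mod. Qed.

Lemma count_Q p d k : 0 < d -> perm_eq p (iota 1 d.+1) -> nth 0 p 0 < nth 0 p d ->
  count (inQ p d) (iota 0 (k*d).+1) <= k * ((nth 0 p 0 - 1) + (d.+1 - nth 0 p d)).
Proof.
move=> d0 pp p0d.
have sp : size p = d.+1 by rewrite (perm_size pp) size_iota.
have blk j : count (inQ p d) (iota (j * d) d) = count (inQ p d) (iota 0 d).
  rewrite -[j * d]addn0 iotaDl count_map; apply: eq_count => a /=.
  by rewrite (inQ_mod _ _ d0) modnMDl -inQ_mod.
have -> : count (inQ p d) (iota 0 (k * d).+1) = k * count (inQ p d) (iota 0 d).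
  rewrite -addn1 iotaD count_cat /= add0n.
  have -> : inQ p d (k * d) = false by rewrite /inQ modnMl.
  rewrite /= addn0 addn0; elim: k => [|k IH]; first by rewrite mul0n.
  by rewrite mulSnr iotaD count_cat IH add0n blk mulSnr.
rewrite leq_mul2l; apply/orP; right.
set P := fun a => (nth 0 p a < nth 0 p 0) || (nth 0 p d < nth 0 p a).
have h1 : count (inQ p d) (iota 0 d) <= count P (iota 0 d.+1).
  rewrite -addn1 iotaD count_cat; apply: leq_trans (leq_addr _ _).
  rewrite (@eq_in_count _ _ (fun a => (0 < a) && P a)); last first.
    by move=> a; rewrite mem_iota add0n => /andP[_ ad]; rewrite /inQ modn_small.
  by apply: sub_count => a /andP[].
apply: leq_trans h1 _.
set P' := fun x => (x < nth 0 p 0) || (nth 0 p d < x).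
have -> : count P (iota 0 d.+1) = count P' (iota 1 d.+1).
  move/seq.permP: pp => pp; rewrite -pp -{1}(mkseq_nth 0 p) sp /mkseq count_map //.
apply: leq_trans (_ : count (fun x => x < nth 0 p 0) (iota 1 d.+1)
                     + count (fun x => nth 0 p d < x) (iota 1 d.+1) <= _).
  rewrite -count_predUI; exact: leq_addr.
rewrite count_lt_iota count_gt_iota; lia.
Qed.

Lemma chain_le d (L : seq nat) x : sorted ltn (x :: L) ->
  all (fun pr => pr.2 - pr.1 <= d) (zip (x :: L) L) -> last x L <= x + size L * d.
Proof.
elim: L x => [|y L IH] x /=; first by rewrite addn0.
move=> /andP[xy sL] /andP[hxy hall].
have := IH y sL hall; rewrite mulSn; lia.
Qed.

Lemma chain_nth d (L : seq nat) x : sorted ltn (x :: L) ->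
  all (fun pr => pr.2 - pr.1 <= d) (zip (x :: L) L) -> last x L = x + size L * d ->
  forall j, j <= size L -> nth 0 (x :: L) j = x + j * d.
Proof.
elim: L x => [|y L IH] x /=.
  by move=> _ _ _ j; rewrite leqn0 => /eqP ->; rewrite addn0.
move=> /andP[xy sL] /andP[hxy hall] hl.
have hle := chain_le sL hall.
have ey : y = x + d by move: hl; rewrite mulSn; lia.
have hl' : last y L = y + size L * d by move: hl; rewrite mulSn; lia.
case=> [|j] hj /=; first by rewrite addn0.
rewrite (IH y sL hall hl' j hj) ey mulSn; lia.
Qed.

Lemma word_nth n (s : 'S_n) (i : 'I_n) : nth 0 (word s) i = (s i).+1.
Proof. by rewrite /word (nth_map i) ?size_enum_ord // nth_ord_enum. Qed.

Lemma size_word n (s : 'S_n) : size (word s) = n.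
Proof. by rewrite /word size_map size_enum_ord. Qed.

Definition LS n (S : {set 'I_n.+1}) := sort leq [seq val i | i <- enum S].

Lemma mem_LS n (S : {set 'I_n.+1}) (x : 'I_n.+1) : (val x \in LS S) = (x \in S).
Proof. by rewrite /LS mem_sort mem_map ?mem_enum //; exact: val_inj. Qed.

Lemma size_LS n (S : {set 'I_n.+1}) : size (LS S) = #|S|.
Proof. by rewrite /LS size_sort size_map -cardE. Qed.

Lemma forced d k p (w : seq nat) (S : {set 'I_(k*d).+2}) :
  0 < d -> 0 < k -> size p = d.+1 -> size w = (k*d).+1 ->
  #|S| = k -> is_cluster p w (LS S) ->
  forall j, j < k -> nth 0 (LS S) j = 1 + j * d.
Proof.
move=> d0 k0 sp sw cS /and5P[so al hd lst ov].
have sz := size_LS S; rewrite cS in sz.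
move: so al hd lst ov sz; case: (LS S) => [|x L] /=; first by move=> *; subst; rewrite ltnn in k0.
move=> so al /eqP hx /eqP lst ov sz; subst x.
have ov' : all (fun pr => pr.2 - pr.1 <= d) (zip (1 :: L) L).
  apply: sub_all ov => pr /andP[_ /andP[h _]]; by rewrite sp in h.
have hl : last 1 L = 1 + size L * d.
  rewrite lst sw sp -sz mulSn; lia.
move=> j jk; apply: (chain_nth so ov' hl); lia.
Qed.

Definition valid d k p n (s : 'S_n) :=
  [forall j : 'I_k, st (window (word s) (1 + j * d) d.+1) == p].

Lemma set_bound d k p (s : 'S_(k*d).+1) : 0 < d -> 0 < k -> size p = d.+1 ->
  #|[set S : {set 'I_(k*d).+2} |
      (#|S| == k) && is_cluster p (word s) (sort leq [seq val i | i <- enum S])]|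
  <= valid d k p s.
Proof.
move=> d0 k0 sp.
set A := [set S : {set 'I_(k*d).+2} | _].
have HA : forall S, S \in A -> (forall j, j < k -> nth 0 (LS S) j = 1 + j * d) /\ #|S| = k
   /\ is_cluster p (word s) (LS S).
  move=> S; rewrite inE => /andP[/eqP cS cl]; split; last by [].
  exact: (forced d0 k0 sp (size_word s) cS cl).
case V: (valid d k p s); last first.
  rewrite leqn0; apply/eqP/eq_card0 => S /=; apply/negP => SA.
  have [hn [cS cl]] := HA S SA.
  move/negP: V; apply; apply/forallP => j.
  move: cl => /and5P[_ al _ _ _].
  have jL : 1 + j * d \in LS S by rewrite -(hn j (ltn_ord j)) mem_nth // size_LS cS.
  by move/allP: al => /(_ _ jL) /and3P[_ _]; rewrite sp.
rewrite /=; apply/card_le1P => S1 S1A S2; apply/idP/idP; last by move/eqP ->.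
move=> S2A; apply/eqP/setP => x.
have [h1 [c1 _]] := HA S1 S1A; have [h2 [c2 _]] := HA S2 S2A.
have E : LS S2 = LS S1.
  apply: (eq_from_nth (x0 := 0)); first by rewrite !size_LS c1 c2.
  by move=> j; rewrite size_LS c2 => jk; rewrite h1 ?h2.
by rewrite -!mem_LS E.
Qed.

Lemma pfacts d p : perm_eq p (iota 1 d.+1) ->
  [/\ size p = d.+1, uniq p & forall a, a <= d -> 0 < nth 0 p a <= d.+1].
Proof.
move=> pp; have sp : size p = d.+1 by rewrite (perm_size pp) size_iota.
split => //; first by rewrite (perm_uniq pp) iota_uniq.
move=> a ad; have : nth 0 p a \in p by rewrite mem_nth // sp ltnS.
by rewrite (perm_mem pp) mem_iota add1n ltnS.
Qed.

Lemma valid_order d k p (s : 'S_(k*d).+1) : 0 < d -> perm_eq p (iota 1 d.+1) ->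
  nth 0 p 0 < nth 0 p d -> valid d k p s ->
  forall i j : 'I_(k*d).+1, ~~ inQ p d i -> ~~ inQ p d j -> keyf p d i < keyf p d j -> s i < s j.
Proof.
move=> d0 pp p0d /forallP Vs i j Qi Qj kij.
have [sp up hb] := pfacts pp.
have Hw : forall j a b, j < k -> a <= d -> b <= d -> nth 0 p a < nth 0 p b ->
    nth 0 (word s) (j*d+a) < nth 0 (word s) (j*d+b).
  move=> j' a b jk ad bd pab.
  have /eqP V := Vs (Ordinal jk).
  have jk' : j'.+1 * d <= k * d by rewrite leq_mul2r jk orbT.
  have sw : size (window (word s) (1 + j' * d) d.+1) = d.+1.
    rewrite /window add1n /= size_takel // size_drop size_word.
    move: jk'; rewrite mulSn; lia.
  have := st_lt V (a := a) (b := b); rewrite sw !ltnS => /(_ ad bd pab).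
  by rewrite /window add1n /= !nth_take ?ltnS // !nth_drop.
have := order_lemma d0 sp up hb p0d Hw (t := i) (u := j).
rewrite -ltnS (ltn_ord i) -ltnS (ltn_ord j) !word_nth ltnS; by apply.
Qed.

Lemma main_bound d k p : 0 < d -> 0 < k -> perm_eq p (iota 1 d.+1) ->
  nth 0 p 0 < nth 0 p d ->
  cluster_number p (k*d).+1 k <= ((k*d).+1) ^ (k * ((nth 0 p 0 - 1) + (d.+1 - nth 0 p d))).
Proof.
move=> d0 k0 pp p0d.
have [sp up hb] := pfacts pp.
rewrite /cluster_number.
apply: leq_trans (_ : \sum_(s : 'S_(k*d).+1) (valid d k p s : nat) <= _).
  by apply: leq_sum => s _; exact: set_bound.
have -> : \sum_(s : 'S_(k*d).+1) (valid d k p s : nat) = \sum_(s : 'S_(k*d).+1 | valid d k p s) 1.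
  by rewrite [RHS]big_mkcond; apply: eq_bigr => s _; case: (valid d k p s).
rewrite sum1_card.
set Ql := [seq t <- iota 0 (k*d).+1 | inQ p d t].
pose f (s : 'S_(k*d).+1) := [ffun i : 'I_(size Ql) => s (inord (nth 0 Ql i))].
apply: leq_trans (_ : #|{ffun 'I_(size Ql) -> 'I_(k*d).+1}| <= _).
  apply: (@leq_card_in _ _ f) => s1 s2 V1 V2 Ef.
  apply: (inj_main (R := fun t => ~~ inQ p d t) (key := keyf p d)).
  - exact: key_inj d0 up sp hb.
  - exact: valid_order d0 pp p0d V1.
  - exact: valid_order d0 pp p0d V2.
  - move=> i /negbNE Qi.
    have iQ : val i \in Ql by rewrite mem_filter Qi mem_iota /= add0n ltn_ord.
    move/ffunP: Ef => Ef; have := Ef (Ordinal (etrans (index_mem _ _) iQ)).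
    by rewrite /f !ffunE /= nth_index // inord_val.
rewrite card_ffun !card_ord; apply: leq_pexp2l => //.
rewrite size_filter; exact: count_Q.
Qed.

Lemma leq_base a b e : a <= b -> a ^ e <= b ^ e.
Proof. by move=> ab; elim: e => [|e IH] //; rewrite !expnS leq_mul. Qed.

Theorem lemma4p2 (m : nat) (p : seq nat) :
  is_perm_seq m p -> standard_form m p ->
  exists C K : nat, forall k : nat, K <= k ->
    cluster_number p (1 + k * (m - 1)) k
      <= (C * k ^ (m - nth 0 p m.-1 + nth 0 p 0 - 1)) ^ k.
Proof.
case: m => [|[|d]] hp /andP[hs1 hs2]; try by rewrite ltnn in hs1.
move: hs1 hs2 => /= hs1 hs2.
have [sp up hb] := pfacts hp.
have p01 := hb 0 (leq0n _).
set e := (nth 0 p 0 - 1) + (d.+2 - nth 0 p d.+1).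
exists (d.+2 ^ e), 1 => k k1.
have -> : 1 + k * (d.+2 - 1) = (k * d.+1).+1 by rewrite subn1 /= add1n.
have -> : d.+2 - nth 0 p d.+1 + nth 0 p 0 - 1 = e by rewrite /e; lia.
apply: leq_trans (main_bound (ltn0Sn d) k1 hp hs1) _.
rewrite -expnMn -expnM [e * k]mulnC; apply: leq_base.
rewrite mulnC mulSn; lia.
Qed.
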